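(* Consider the optimistic planning procedure with budget $N$. (i) If the procedure stops at a step $n<N$ because the selected node $i_n$ has depth $d$, then $v^*-v(i_n)=0$. (ii) Otherwise, if there exist $\lambda\in(1/K,1]$ and an integer $1\le d_0\le d$ such that $p_l((d-l)\Delta)\le\lambda^l$ for all $d_0\le l\le d$, then for $N>n_0:=\frac{K^{d_0+1}-1}{K-1}$ the output node $i_N$ satisfies $$v^*-v(i_N)\le\Big(d-\frac{\log(N-n_0)}{\log(\lambda K)}-\frac{\log(\lambda K-1)}{\log(\lambda K)}+1\Big)\Delta.$$
   Context: Fix $K\ge2$ arms, $\mathcal Z=\{0,\dots,z_{\max}\}$, a depth $d\ge1$, a root state $\mathbf z\in\mathcal Z^K$, and real numbers $\tilde f_j(z)$ for all arms $j$ and $z\in\mathcal Z$. The tree: a node of depth $l$ is a sequence of $l$ arms; its children append one arm. Each node $i$ carries a state $\mathbf z(i)\in\mathcal Z^K$ obtained from the root by the rule: playing arm $j$ from state $\mathbf z$ gives reward $\tilde f_j(z_j)$ and new state with $z_j\mapsto0$ and $z_{j'}\mapsto\min\{z_{\max},z_{j'}+1\}$ for $j'\ne j$. For a node $i$ of depth $l(i)$: $u(i)$ is the sum of rewards along the path from the root to $i$; $v(i)=u(i)+$ the maximum over continuations of $i$ to depth $d$ of the sum of rewards of the remaining $d-l(i)$ steps; $v^*=\max\{v(i): i\text{ of depth }d\}$. For $1\le l\le d$, $g_j(z,l)=\max\{\tilde f_j(z),\tilde f_j(\min(z+1,z_{\max})),\dots,\tilde f_j(\min(z+l,z_{\max})),\tilde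 f_j(0),\dots,\tilde f_j(\min(l,z_{\max}))\}$; $\Psi(\mathbf z,m)=m\max_jg_j(z_j,m)$ for $m\ge1$ and $\Psi(\mathbf z,0)=0$; $b(i)=u(i)+\Psi(\mathbf z(i),d-l(i))$. Procedure: set $\mathcal T_0=\emptyset$, $\mathcal S_0=\{\text{root}\}$. At step $n=0,1,\dots,N-1$ select $i_n\in\arg\max_{i\in\mathcal S_n}b(i)$; if $i_n$ has depth $d$, stop and output $i_n$; otherwise move $i_n$ from $\mathcal S_n$ to $\mathcal T_{n+1}=\mathcal T_n\cup\{i_n\}$ and add its $K$ children, giving $\mathcal S_{n+1}$. If not stopped after $N$ expansions, let $d_N$ be the maximal depth of nodes in $\mathcal T_N$ and output $i_N$, a node of depth $d_N$ in $\mathcal T_N$ with largest $b$. Let $\Delta=\max_{j,z}\tilde f_j(z)-\min\{\min_{j,z}\tilde f_j(z),0\}$. A node $i$ is $\epsilon$-optimal if $v^*-v(i)\le\epsilon$; $p_l(\epsilon)$ is the proportion of the $K^l$ nodes of depth $l$ that are $\epsilon$-optimal. *)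

(* Defs.v *)
From Stdlib Require Import Reals List Arith.
Import ListNotations.
Open Scope R_scope.

(* A node of the tree = the sequence of arms played from the root,
   listed in order (first element = first arm played). Arms are 0..K-1. *)
Definition node := list nat.

(* A state is a map arm -> Z-value (only arms 0..K-1 matter). *)
Definition next_state (zmax : nat) (z : nat -> nat) (j : nat) : nat -> nat :=
  fun j' => if Nat.eqb j' j then 0%nat else Nat.min zmax (S (z j')).

Definition state (zmax : nat) (z : nat -> nat) (i : node) : nat -> nat :=
  fold_left (next_state zmax) i z.

Fixpoint path_reward (f : nat -> nat -> R) (zmax : nat) (z : nat -> nat) (c : node) : R :=
  match c with
  | [] => 0
  | j :: t => f j (z j) + path_reward f zmax (next_state zmax z j) t
  end.

Definition u (f : nat -> nat -> R) (zmax : nat) (z : nat -> nat) (i : node) : R :=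
  path_reward f zmax z i.

Fixpoint all_seqs (K m : nat) : list node :=
  match m with
  | O => [[]]
  | S m' => flat_map (fun j => map (cons j) (all_seqs K m')) (seq 0 K)
  end.

Definition Rmax_list (l : list R) : R :=
  match l with [] => 0 | x :: t => fold_right Rmax x t end.
Definition Rmin_list (l : list R) : R :=
  match l with [] => 0 | x :: t => fold_right Rmin x t end.

Definition v (K zmax d : nat) (f : nat -> nat -> R) (z : nat -> nat) (i : node) : R :=
  u f zmax z i +
  Rmax_list (map (fun c => path_reward f zmax (state zmax z i) c)
                 (all_seqs K (d - length i))).

Definition vstar (K zmax d : nat) (f : nat -> nat -> R) (z : nat -> nat) : R :=
  Rmax_list (map (v K zmax d f z) (all_seqs K d)).

Definition g (f : nat -> nat -> R) (zmax j zj l : nat) : R :=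
  Rmax_list (map (fun k => f j (Nat.min (zj + k) zmax)) (seq 0 (S l)) ++
             map (fun k => f j (Nat.min k zmax)) (seq 0 (S l))).

Definition Psi (K : nat) (f : nat -> nat -> R) (zmax : nat) (zs : nat -> nat) (m : nat) : R :=
  match m with
  | O => 0
  | _ => INR m * Rmax_list (map (fun j => g f zmax j (zs j) m) (seq 0 K))
  end.

Definition b (K zmax d : nat) (f : nat -> nat -> R) (z : nat -> nat) (i : node) : R :=
  u f zmax z i + Psi K f zmax (state zmax z i) (d - length i).

Definition all_values (K zmax : nat) (f : nat -> nat -> R) : list R :=
  flat_map (fun j => map (f j) (seq 0 (S zmax))) (seq 0 K).

Definition Delta_f (K zmax : nat) (f : nat -> nat -> R) : R :=
  Rmax_list (all_values K zmax f) - Rmin (Rmin_list (all_values K zmax f)) 0.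

(* p_l(eps): proportion of eps-optimal nodes among the K^l nodes of depth l *)
Definition eps_optimal (K zmax d : nat) (f : nat -> nat -> R) (z : nat -> nat)
  (eps : R) (i : node) : Prop :=
  vstar K zmax d f z - v K zmax d f z i <= eps.

Definition prop_opt (K zmax d : nat) (f : nat -> nat -> R) (z : nat -> nat) (l : nat) (eps : R) : R :=
  INR (length (filter (fun i => if Rle_dec (vstar K zmax d f z - v K zmax d f z i) eps
                                then true else false) (all_seqs K l)))
  / INR (K ^ l).

Definition node_eqb (i j : node) : bool :=
  if list_eq_dec Nat.eq_dec i j then true else false.

Definition children (K : nat) (i : node) : list node :=
  map (fun j => i ++ [j]) (seq 0 K).

Fixpoint Sset (K : nat) (sel : nat -> node) (n : nat) : list node :=
  match n with
  | O => [[]]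
  | S n' => filter (fun j => negb (node_eqb j (sel n'))) (Sset K sel n')
            ++ children K (sel n')
  end.

Definition Tset (sel : nat -> node) (n : nat) : list node := map sel (seq 0 n).

Definition selects_argmax (K zmax d : nat) (f : nat -> nat -> R) (z : nat -> nat)
  (sel : nat -> node) (n : nat) : Prop :=
  In (sel n) (Sset K sel n) /\
  forall j, In j (Sset K sel n) -> b K zmax d f z j <= b K zmax d f z (sel n).

Definition dN (sel : nat -> node) (N : nat) : nat :=
  fold_right Nat.max 0%nat (map (fun k => length (sel k)) (seq 0 N)).

(* Main.v *)
Require Import Defs.
From Stdlib Require Import Reals List Arith Lia Lra.
Import ListNotations.
Open Scope R_scope.

Lemma fr_ge a t x : In x (a::t) -> x <= fold_right Rmax a t.
Proof.
  induction t as [|y t IH]; simpl; intros H.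
  - destruct H as [H|[]]; subst; lra.
  - destruct H as [H|[H|H]].
    + subst. eapply Rle_trans; [apply IH; left; auto| apply Rmax_r].
    + subst; apply Rmax_l.
    + eapply Rle_trans; [apply IH; right; auto| apply Rmax_r].
Qed.

Lemma Rmax_list_ge l x : In x l -> x <= Rmax_list l.
Proof. destruct l as [|a t]; simpl; [tauto|]. intros H; apply fr_ge; simpl; auto. Qed.

Lemma Rmax_list_le l M : l <> [] -> (forall x, In x l -> x <= M) -> Rmax_list l <= M.
Proof.
  destruct l as [|a t]; [tauto|]. intros _ H. simpl.
  induction t as [|y t IH]; simpl.
  - apply H; simpl; auto.
  - apply Rmax_lub. apply H; simpl; auto. apply IH. intros x Hx; apply H.
    simpl in *. tauto.
Qed.

Lemma Rmax_list_in l : l <> [] -> In (Rmax_list l) l.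
Proof.
  destruct l as [|a t]; [tauto|]. intros _. simpl.
  induction t as [|y t IH]; simpl; auto.
  destruct (Rle_dec y (fold_right Rmax a t)).
  - rewrite Rmax_right by auto. simpl in *; tauto.
  - rewrite Rmax_left by lra. simpl; auto.
Qed.

Lemma Rmin_list_le l x : In x l -> Rmin_list l <= x.
Proof.
  destruct l as [|a t]; simpl; [tauto|].
  induction t as [|y t IH]; simpl; intros H.
  - destruct H as [H|[]]; subst; lra.
  - destruct H as [H|[H|H]].
    + subst. eapply Rle_trans; [apply Rmin_r| apply IH; left; auto].
    + subst; apply Rmin_l.
    + eapply Rle_trans; [apply Rmin_r| apply IH; right; auto].
Qed.

Lemma in_all_seqs K m w : In w (all_seqs K m) <-> length w = m /\ (forall j, In j w -> (j < K)%nat).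
Proof.
  revert w; induction m as [|m IH]; intros w; simpl.
  - split.
    + intros [H|[]]; subst; simpl; split; auto; tauto.
    + intros [H _]. destruct w; simpl in *; auto; discriminate.
  - rewrite in_flat_map. split.
    + intros [j [Hj Hw]]. apply in_map_iff in Hw. destruct Hw as [w' [<- Hw']].
      apply IH in Hw'. apply in_seq in Hj. destruct Hw' as [H1 H2]. simpl. split; [lia|].
      intros j' [<-|H]; [lia| auto].
    + intros [H1 H2]. destruct w as [|j w']; simpl in H1; [discriminate|].
      exists j. split. apply in_seq. split; [lia|]. simpl. apply H2; simpl; auto.
      apply in_map. apply IH. split; [lia|]. intros; apply H2; simpl; auto.
Qed.

Lemma length_fm (A : list node) (l : list nat) :
  length (flat_map (fun j => map (cons j) A) l) = (length l * length A)%nat.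
Proof. induction l; simpl; auto. rewrite length_app, length_map, IHl. reflexivity. Qed.

Lemma length_all_seqs K m : length (all_seqs K m) = (K ^ m)%nat.
Proof. induction m; simpl; auto. rewrite length_fm, length_seq, IHm. auto. Qed.

Lemma path_reward_app f zmax z a c :
  path_reward f zmax z (a ++ c) = path_reward f zmax z a + path_reward f zmax (state zmax z a) c.
Proof.
  revert z; induction a as [|j a IH]; intros z; simpl.
  - unfold state; simpl; lra.
  - rewrite IH. unfold state; simpl. lra.
Qed.

Lemma next_state_le zmax z j j' : (next_state zmax z j j' <= zmax)%nat.
Proof. unfold next_state. destruct (Nat.eqb j' j); lia. Qed.

Lemma state_bound K zmax z i : (forall j, (j < K)%nat -> (z j <= zmax)%nat) ->
  forall j, (j < K)%nat -> (state zmax z i j <= zmax)%nat.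
Proof.
  revert z; induction i as [|x i IH]; intros z Hz j Hj; unfold state; simpl.
  - auto.
  - apply IH; auto. intros; apply next_state_le.
Qed.

Section PR.
Variables (K zmax : nat) (f : nat -> nat -> R).

Definition Gmax (zs : nat -> nat) (m : nat) : R :=
  Rmax_list (map (fun j => g f zmax j (zs j) m) (seq 0 K)).

Lemma pr_upper zs m : forall c w t,
  (forall j, In j c -> (j < K)%nat) -> (t + length c <= m)%nat ->
  (forall j, (j < K)%nat -> w j = Nat.min (zs j + t) zmax \/ exists k, (k <= t)%nat /\ w j = Nat.min k zmax) ->
  path_reward f zmax w c <= INR (length c) * Gmax zs m.
Proof.
  induction c as [|j c IH]; intros w t Hc Ht Hw; cbn [path_reward length].
  - simpl; lra.
  - assert (Hj : (j < K)%nat) by (apply Hc; simpl; auto).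
    assert (H1 : f j (w j) <= g f zmax j (zs j) m).
    { unfold g. apply Rmax_list_ge. apply in_or_app.
      destruct (Hw j Hj) as [E|[k [Hk E]]]; rewrite E.
      - left. apply (in_map (fun k => f j (Nat.min (zs j + k) zmax))). apply in_seq. simpl in Ht. lia.
      - right. apply (in_map (fun k => f j (Nat.min k zmax))). apply in_seq. simpl in Ht. lia. }
    assert (H2 : g f zmax j (zs j) m <= Gmax zs m).
    { unfold Gmax. apply Rmax_list_ge. apply (in_map (fun j => g f zmax j (zs j) m)). apply in_seq. lia. }
    assert (H3 : path_reward f zmax (next_state zmax w j) c <= INR (length c) * Gmax zs m).
    { apply (IH _ (S t)). intros; apply Hc; simpl; auto. simpl in Ht; lia.
      intros j' Hj'. unfold next_state. destruct (Nat.eqb j' j).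
      - right. exists 0%nat. split; lia.
      - destruct (Hw j' Hj') as [E|[k [Hk E]]]; rewrite E.
        + left. lia.
        + right. exists (S k). split; lia. }
    rewrite S_INR. lra.
Qed.

Lemma pr_le_Psi zs c : (forall j, (j < K)%nat -> (zs j <= zmax)%nat) ->
  (forall j, In j c -> (j < K)%nat) ->
  path_reward f zmax zs c <= Psi K f zmax zs (length c).
Proof.
  intros Hz Hc. destruct c as [|j c'].
  - simpl. lra.
  - change (path_reward f zmax zs (j :: c') <= INR (length (j :: c')) * Gmax zs (length (j :: c'))).
    apply (pr_upper zs (length (j :: c')) (j :: c') zs 0); auto.
    intros j0 Hj0. left. specialize (Hz j0 Hj0). lia.
Qed.

Lemma u_le_b d z a c : (forall j, (j < K)%nat -> (z j <= zmax)%nat) ->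
  (forall j, In j c -> (j < K)%nat) -> (length a + length c = d)%nat ->
  u f zmax z (a ++ c) <= b K zmax d f z a.
Proof.
  intros Hz Hc Hl. unfold u, b. rewrite path_reward_app.
  replace (d - length a)%nat with (length c) by lia.
  apply Rplus_le_compat_l. apply pr_le_Psi; auto.
  apply state_bound; auto.
Qed.

Lemma all_values_in j x : (j < K)%nat -> (x <= zmax)%nat -> In (f j x) (all_values K zmax f).
Proof.
  intros Hj Hx. unfold all_values. apply in_flat_map. exists j. split.
  apply in_seq; lia. apply in_map. apply in_seq; lia.
Qed.

Lemma pr_lower c w : (forall j, In j c -> (j < K)%nat) -> (forall j, (j < K)%nat -> (w j <= zmax)%nat) ->
  INR (length c) * Rmin_list (all_values K zmax f) <= path_reward f zmax w c.
Proof.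
  revert w; induction c as [|j c IH]; intros w Hc Hw; cbn [path_reward length].
  - simpl; lra.
  - rewrite S_INR.
    assert (Rmin_list (all_values K zmax f) <= f j (w j)).
    { apply Rmin_list_le. apply all_values_in. apply Hc; simpl; auto. apply Hw, Hc; simpl; auto. }
    assert (INR (length c) * Rmin_list (all_values K zmax f) <= path_reward f zmax (next_state zmax w j) c).
    { apply IH. intros; apply Hc; simpl; auto. intros; apply next_state_le. }
    lra.
Qed.

Lemma Delta_ge (x : R) : (0 < K)%nat -> Rmin_list (all_values K zmax f) <= Rmax_list (all_values K zmax f).
Proof.
  intros HK. apply Rle_trans with (f 0%nat 0%nat).
  apply Rmin_list_le, all_values_in; lia. apply Rmax_list_ge, all_values_in; lia.
Qed.

Lemma b_minus_v d z i : (0 < K)%nat -> (forall j, (j < K)%nat -> (z j <= zmax)%nat) ->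
  b K zmax d f z i - v K zmax d f z i <= INR (d - length i) * Delta_f K zmax f.
Proof.
  intros HK Hz. unfold b, v. set (m := (d - length i)%nat). set (zs := state zmax z i).
  set (M := Rmax_list (all_values K zmax f)). set (mn := Rmin_list (all_values K zmax f)).
  assert (Hzs : forall j, (j < K)%nat -> (zs j <= zmax)%nat) by (apply state_bound; auto).
  assert (HP : Psi K f zmax zs m <= INR m * M).
  { unfold Psi. destruct m as [|m']. simpl; lra.
    apply Rmult_le_compat_l. apply pos_INR.
    apply Rmax_list_le. destruct K; [lia|]. simpl; discriminate.
    intros x Hx. apply in_map_iff in Hx. destruct Hx as [j [<- Hj]]. apply in_seq in Hj.
    unfold g. apply Rmax_list_le. simpl; discriminate.
    intros y Hy. apply in_app_or in Hy. destruct Hy as [Hy|Hy]; apply in_map_iff in Hy;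
      destruct Hy as [k [<- _]]; apply Rmax_list_ge, all_values_in; lia. }
  assert (HL : INR m * mn <= Rmax_list (map (fun c => path_reward f zmax zs c) (all_seqs K m))).
  { eapply Rle_trans; [|apply Rmax_list_ge, (in_map (fun c => path_reward f zmax zs c)), in_all_seqs;
      split; [apply repeat_length| ] ].
    - rewrite <- (repeat_length 0%nat m) at 1. apply pr_lower; auto.
      intros j Hj. apply repeat_spec in Hj. lia.
    - intros j Hj. apply repeat_spec in Hj. lia. }
  assert (HD : M - mn <= Delta_f K zmax f).
  { unfold Delta_f. fold M mn. pose proof (Rmin_l mn 0). lra. }
  assert (0 <= INR m) by apply pos_INR.
  assert (INR m * (M - mn) <= INR m * Delta_f K zmax f) by (apply Rmult_le_compat_l; auto).
  nra.
Qed.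

End PR.

Lemma vstar_attained K zmax d f z : (0 < K)%nat ->
  exists w, In w (all_seqs K d) /\ vstar K zmax d f z = u f zmax z w.
Proof.
  intros HK. unfold vstar.
  assert (Hne : map (v K zmax d f z) (all_seqs K d) <> []).
  { assert (In (repeat 0%nat d) (all_seqs K d)).
    { apply in_all_seqs. split. apply repeat_length. intros j Hj; apply repeat_spec in Hj; lia. }
    destruct (all_seqs K d); [contradiction|]. simpl; discriminate. }
  pose proof (Rmax_list_in _ Hne) as H. apply in_map_iff in H. destruct H as [w [Hw Hin]].
  exists w. split; auto. rewrite <- Hw. unfold v.
  apply in_all_seqs in Hin. destruct Hin as [Hl _]. rewrite Hl, Nat.sub_diag. simpl. lra.
Qed.

Lemma v_le_vstar K zmax d f z w : In w (all_seqs K d) -> v K zmax d f z w <= vstar K zmax d f z.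
Proof. intros H. unfold vstar. apply Rmax_list_ge, in_map; auto. Qed.

Lemma v_full K zmax d f z w : length w = d -> v K zmax d f z w = u f zmax z w.
Proof. intros H. unfold v. rewrite H, Nat.sub_diag. simpl. lra. Qed.

Lemma b_full K zmax d f z w : length w = d -> b K zmax d f z w = u f zmax z w.
Proof. intros H. unfold b. rewrite H, Nat.sub_diag. simpl. lra. Qed.

Lemma in_Tset sel n x : In x (Tset sel n) <-> exists k, (k < n)%nat /\ sel k = x.
Proof.
  unfold Tset. rewrite in_map_iff. split.
  - intros [k [H1 H2]]. apply in_seq in H2. exists k; split; [lia|auto].
  - intros [k [H1 H2]]. exists k; split; auto. apply in_seq; lia.
Qed.

Lemma node_eqb_true i j : node_eqb i j = true <-> i = j.
Proof. unfold node_eqb. destruct (list_eq_dec Nat.eq_dec i j); split; congruence. Qed.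

Section Front.
Variables (K d : nat) (sel : nat -> node).

Lemma arms_S n : (forall k, (k < n)%nat -> In (sel k) (Sset K sel k)) ->
  forall x, In x (Sset K sel n) -> forall j, In j x -> (j < K)%nat.
Proof.
  induction n as [|n IH]; intros Hs x Hx j Hj; simpl in Hx.
  - destruct Hx as [<-|[]]. destruct Hj.
  - apply in_app_or in Hx. destruct Hx as [Hx|Hx].
    + apply filter_In in Hx. destruct Hx as [Hx _]. eapply IH; eauto.
    + unfold children in Hx. apply in_map_iff in Hx. destruct Hx as [j' [<- Hj']].
      apply in_app_or in Hj. destruct Hj as [Hj|[<-|[]]].
      * eapply IH; eauto.
      * apply in_seq in Hj'; lia.
Qed.

Lemma frontier n : (forall k, (k < n)%nat -> In (sel k) (Sset K sel k) /\ (length (sel k) < d)%nat) ->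
  forall w, length w = d -> (forall j, In j w -> (j < K)%nat) ->
  exists a c, w = a ++ c /\ In a (Sset K sel n).
Proof.
  induction n as [|n IH]; intros Hs w Hl Hw.
  - exists [], w. simpl; auto.
  - destruct (IH (fun k Hk => Hs k ltac:(lia)) w Hl Hw) as [a [c [E Ha]]].
    destruct (node_eqb a (sel n)) eqn:Eq.
    + apply node_eqb_true in Eq. subst a.
      destruct c as [|j c'].
      * exfalso. rewrite app_nil_r in E. subst w. destruct (Hs n); lia.
      * exists (sel n ++ [j]), c'. split. rewrite <- app_assoc; auto.
        simpl. apply in_or_app; right. unfold children. apply (in_map (fun j0 => sel n ++ [j0])). apply in_seq.
        assert (j < K)%nat by (apply Hw; rewrite E; apply in_or_app; simpl; auto). lia.
    + exists a, c. split; auto. simpl. apply in_or_app; left. apply filter_In. rewrite Eq. auto.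
Qed.

Definition Jinv n :=
  (forall x, In x (Sset K sel n) -> ~ In x (Tset sel n) /\
      forall p c, x = p ++ c -> c <> [] -> In p (Tset sel n)) /\
  (forall k, (k < n)%nat -> forall p c, sel k = p ++ c -> c <> [] -> In p (Tset sel k)).

Lemma prefix_snoc (a p c : node) j : a ++ [j] = p ++ c -> c <> [] ->
  p = a \/ exists c', a = p ++ c' /\ c' <> [].
Proof.
  intros E Hc. destruct (exists_last Hc) as [c0 [y Ey]]. subst c.
  rewrite app_assoc in E. apply app_inj_tail in E. destruct E as [E _].
  destruct c0 as [|x c0].
  - left. rewrite app_nil_r in E; auto.
  - right. exists (x :: c0). split; auto. discriminate.
Qed.

Lemma Jinv_all n : (forall k, (k < n)%nat -> In (sel k) (Sset K sel k)) -> Jinv n.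
Proof.
  induction n as [|n IH]; intros Hs.
  - split.
    + intros x Hx. simpl in Hx. destruct Hx as [<-|[]]. split.
      * simpl; auto.
      * intros p c E Hc. destruct p, c; simpl in E; try discriminate. congruence.
    + intros; lia.
  - destruct IH as [J1 J2]; auto.
    assert (Hn : In (sel n) (Sset K sel n)) by auto.
    assert (Tmono : forall y, In y (Tset sel n) -> In y (Tset sel (S n))).
    { intros y Hy. apply in_Tset in Hy. apply in_Tset. destruct Hy as [k [? ?]]. exists k; split; [lia|auto]. }
    split.
    + intros x Hx. simpl in Hx. apply in_app_or in Hx. destruct Hx as [Hx|Hx].
      * apply filter_In in Hx. destruct Hx as [Hx Hne].
        assert (x <> sel n).
        { intros E. rewrite <- node_eqb_true in E. rewrite E in Hne. discriminate. }
        destruct (J1 x Hx) as [N1 N2]. split.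
        -- intros HT. apply in_Tset in HT. destruct HT as [k [Hk E]].
           destruct (Nat.eq_dec k n). subst; auto.
           apply N1, in_Tset. exists k; split; [lia|auto].
        -- intros p c E Hc. apply Tmono; eauto.
      * unfold children in Hx. apply in_map_iff in Hx. destruct Hx as [j [<- _]].
        destruct (J1 _ Hn) as [N1 N2]. split.
        -- intros HT. apply in_Tset in HT. destruct HT as [k [Hk E]].
           destruct (Nat.eq_dec k n).
           ++ subst. apply (f_equal (@length nat)) in E. rewrite length_app in E. simpl in E. lia.
           ++ assert (In (sel n) (Tset sel k)) by (apply (J2 k ltac:(lia) (sel n) [j]); [exact E | discriminate]).
              apply N1. apply in_Tset in H. destruct H as [k' [? ?]]. apply in_Tset. exists k'; split; [lia|auto].
        -- intros p c E Hc. destruct (prefix_snoc _ _ _ _ E Hc) as [->|[c' [E' Hc']]].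
           ++ apply in_Tset. exists n; split; auto.
           ++ apply Tmono. eauto.
    + intros k Hk p c E Hc. destruct (Nat.eq_dec k n).
      * subst k. destruct (J1 _ Hn) as [_ N2]. eauto.
      * apply (J2 k ltac:(lia) p c); auto.
Qed.

Lemma Tset_NoDup n : (forall k, (k < n)%nat -> In (sel k) (Sset K sel k)) -> NoDup (Tset sel n).
Proof.
  intros Hs. unfold Tset. apply NoDup_map_NoDup_ForallPairs; [|apply seq_NoDup].
  assert (key : forall k k', (k < k' < n)%nat -> sel k <> sel k').
  { intros k k' Hk E. assert (Hk' : (k' < n)%nat) by lia.
    destruct (Jinv_all k') as [J1 _]. intros; apply Hs; lia.
    destruct (J1 (sel k') (Hs k' Hk')) as [N1 _]. apply N1, in_Tset. exists k; split; [lia|auto]. }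
  intros k k' Hk Hk' E. apply in_seq in Hk, Hk'.
  destruct (Nat.lt_total k k') as [H|[H|H]]; auto.
  - exfalso; apply (key k k'); [lia|auto].
  - exfalso; apply (key k' k); [lia|auto].
Qed.

End Front.

Lemma sum_zero D : sum_f_R0 (fun _ => 0) D = 0.
Proof. rewrite sum_cte. lra. Qed.

Lemma sum_ind a D : (a <= D)%nat ->
  sum_f_R0 (fun l => if Nat.eqb a l then 1 else 0) D = 1.
Proof.
  induction D as [|D IH]; intros H.
  - assert (a = 0)%nat by lia. subst. simpl. reflexivity.
  - simpl. destruct (Nat.eq_dec a (S D)).
    + subst a. rewrite Nat.eqb_refl.
      rewrite (sum_eq _ (fun _ => 0)). rewrite sum_zero; lra.
      intros i Hi. destruct (Nat.eqb_spec (S D) i); [lia|auto].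
    + rewrite IH by lia. destruct (Nat.eqb_spec a (S D)); [lia|lra].
Qed.

Lemma count_split (L : list node) D : (forall x, In x L -> (length x <= D)%nat) ->
  INR (length L) = sum_f_R0 (fun l => INR (length (filter (fun x => Nat.eqb (length x) l) L))) D.
Proof.
  induction L as [|x L IH]; intros H.
  - simpl. rewrite sum_zero. reflexivity.
  - rewrite (sum_eq _ (fun l => INR (length (filter (fun x => Nat.eqb (length x) l) L)) +
                                (if Nat.eqb (length x) l then 1 else 0))).
    + rewrite sum_plus, <- IH, sum_ind. simpl length. rewrite S_INR. reflexivity.
      apply H; simpl; auto. intros; apply H; simpl; auto.
    + intros i _. cbn [filter]. destruct (Nat.eqb (length x) i); cbn [length]; try rewrite S_INR; lra.
Qed.

Lemma sum_mono (F : nat -> R) a b : (forall i, 0 <= F i) -> (a <= b)%nat -> sum_f_R0 F a <= sum_f_R0 F b.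
Proof.
  intros HF. induction b as [|b IH]; intros H.
  - assert (a = 0)%nat by lia; subst; lra.
  - destruct (Nat.eq_dec a (S b)). subst; lra.
    simpl. specialize (IH ltac:(lia)). specialize (HF (S b)). lra.
Qed.

Lemma sum_bK (x : R) d0 D : 0 <= x ->
  sum_f_R0 (fun l => if Nat.leb l d0 then x ^ l else 0) D <= sum_f_R0 (fun l => x ^ l) d0.
Proof.
  intros Hx. destruct (Nat.le_gt_cases D d0) as [H|H].
  - rewrite (sum_eq _ (fun l => x ^ l)). apply sum_mono; auto. intros; apply pow_le; auto.
    intros i Hi. destruct (Nat.leb_spec i d0); [auto|lia].
  - assert (E : forall e, sum_f_R0 (fun l => if Nat.leb l d0 then x ^ l else 0) (d0 + e) =
                         sum_f_R0 (fun l => x ^ l) d0).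
    { induction e as [|e IH].
      - rewrite Nat.add_0_r. apply sum_eq. intros i Hi. destruct (Nat.leb_spec i d0); [auto|lia].
      - rewrite Nat.add_succ_r, tech5, IH. destruct (Nat.leb_spec (S (d0 + e)) d0); [lia|lra]. }
    replace D with (d0 + (D - d0))%nat by lia. rewrite E. lra.
Qed.

Lemma dN_ge sel N k : (k < N)%nat -> (length (sel k) <= dN sel N)%nat.
Proof.
  intros Hk. unfold dN.
  assert (In (length (sel k)) (map (fun k => length (sel k)) (seq 0 N))).
  { apply (in_map (fun k => length (sel k))). apply in_seq; lia. }
  revert H. generalize (map (fun k => length (sel k)) (seq 0 N)). intros l.
  induction l; simpl; [tauto|]. intros [H|H]; subst; try lia. specialize (IHl H). lia.
Qed.

Lemma vstar_le_sel K zmax d f z sel n : (0 < K)%nat ->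
  (forall j, (j < K)%nat -> (z j <= zmax)%nat) ->
  (forall k, (k < n)%nat -> selects_argmax K zmax d f z sel k /\ (length (sel k) < d)%nat) ->
  selects_argmax K zmax d f z sel n ->
  vstar K zmax d f z <= b K zmax d f z (sel n).
Proof.
  intros HK Hz Hk Hn.
  destruct (vstar_attained K zmax d f z HK) as [w [Hw E]]. rewrite E.
  apply in_all_seqs in Hw. destruct Hw as [Hl Hw].
  destruct (frontier K d sel n) with (w := w) as [a [c [Ew Ha]]]; auto.
  { intros k Hk'. destruct (Hk k Hk') as [[H1 _] H2]. auto. }
  apply Rle_trans with (b K zmax d f z a).
  - subst w. apply u_le_b; auto. intros j Hj; apply Hw, in_or_app; auto.
    rewrite <- Hl, length_app. reflexivity.
  - destruct Hn as [_ Hn]. apply Hn; auto.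
Qed.

Theorem proposition2
  (K zmax d : nat) (z : nat -> nat) (f : nat -> nat -> R) (N : nat)
  (HK : (2 <= K)%nat) (Hd : (1 <= d)%nat)
  (Hz : forall j, (j < K)%nat -> (z j <= zmax)%nat) :
  (* (i) stopping at step n < N with a node of depth d *)
  (forall (sel : nat -> node) (n : nat),
     (n < N)%nat ->
     (forall k, (k < n)%nat ->
        selects_argmax K zmax d f z sel k /\ (length (sel k) < d)%nat) ->
     selects_argmax K zmax d f z sel n ->
     length (sel n) = d ->
     vstar K zmax d f z - v K zmax d f z (sel n) = 0)
  /\
  (* (ii) no stop during the N expansions *)
  (forall (sel : nat -> node) (lambda : R) (d0 : nat) (iN : node),
     1 / INR K < lambda <= 1 ->
     (1 <= d0 <= d)%nat ->
     (forall l, (d0 <= l <= d)%nat ->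
        prop_opt K zmax d f z l (INR (d - l)%nat * Delta_f K zmax f) <= lambda ^ l) ->
     INR N > (INR K ^ (d0 + 1) - 1) / (INR K - 1) ->
     (forall k, (k < N)%nat ->
        selects_argmax K zmax d f z sel k /\ (length (sel k) < d)%nat) ->
     In iN (Tset sel N) ->
     length iN = dN sel N ->
     (forall j, In j (Tset sel N) -> length j = dN sel N ->
        b K zmax d f z j <= b K zmax d f z iN) ->
     let n0 := (INR K ^ (d0 + 1) - 1) / (INR K - 1) in
     vstar K zmax d f z - v K zmax d f z iN <=
       (INR d - ln (INR N - n0) / ln (lambda * INR K)
              - ln (lambda * INR K - 1) / ln (lambda * INR K) + 1)
       * Delta_f K zmax f).
Proof.
  assert (HK0 : (0 < K)%nat) by lia.
  split.
  - intros sel n Hn Hk Hsel Hlen.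
    pose proof (vstar_le_sel K zmax d f z sel n HK0 Hz Hk Hsel) as H1.
    rewrite b_full in H1 by auto. rewrite v_full by auto.
    assert (H2 : v K zmax d f z (sel n) <= vstar K zmax d f z).
    { apply v_le_vstar. apply in_all_seqs. split; auto.
      apply (arms_S K sel n); [|apply Hsel].
      intros k Hk'. apply Hk; auto. }
    rewrite v_full in H2 by auto. lra.
  - intros sel lambda d0 iN Hlam Hd0 Hprop HN Hall HiN HlenN _ n0.
    subst n0.
    set (D := dN sel N) in *.
    set (Delta := Delta_f K zmax f) in *.
    set (q := lambda * INR K).
    assert (HKR : 2 <= INR K) by (replace 2 with (INR 2) by (simpl; lra); apply le_INR; auto).
    assert (Hq1 : 1 < q).
    { unfold q. destruct Hlam as [Hl _].
      apply Rmult_lt_compat_r with (r := INR K) in Hl; [|lra].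
      replace (1 / INR K * INR K) with 1 in Hl by (field; lra). lra. }
    assert (HDelta : 0 <= Delta).
    { unfold Delta, Delta_f. pose proof (Delta_ge K zmax f 0 HK0). pose proof (Rmin_l (Rmin_list (all_values K zmax f)) 0). lra. }
    assert (Hsk : forall k, (k < N)%nat -> In (sel k) (Sset K sel k)).
    { intros k Hk. apply Hall; auto. }
    assert (Hexp : forall k, (k < N)%nat ->
       vstar K zmax d f z - v K zmax d f z (sel k) <= INR (d - length (sel k)) * Delta).
    { intros k Hk. pose proof (vstar_le_sel K zmax d f z sel k HK0 Hz
        (fun k' Hk' => Hall k' ltac:(lia)) (proj1 (Hall k Hk))).
      pose proof (b_minus_v K zmax f d z (sel k) HK0 Hz). unfold Delta. lra. }
    assert (Harms : forall k, (k < N)%nat -> forall j, In j (sel k) -> (j < K)%nat).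
    { intros k Hk. apply (arms_S K sel k); auto. intros; apply Hsk; lia. }
    apply in_Tset in HiN. destruct HiN as [k0 [Hk0 Ei]]. subst iN.
    assert (HDd : (D < d)%nat) by (rewrite <- HlenN; apply Hall; auto).
    set (T := Tset sel N).
    assert (HTlen : length T = N) by (unfold T, Tset; rewrite length_map, length_seq; auto).
    assert (HND : NoDup T) by (apply Tset_NoDup with (K := K); auto).
    assert (HTD : forall x, In x T -> (length x <= D)%nat).
    { intros x Hx. apply in_Tset in Hx. destruct Hx as [k [Hk <-]]. apply dN_ge; auto. }
    assert (Hcount : forall l, (l <= D)%nat ->
       INR (length (filter (fun x => Nat.eqb (length x) l) T)) <=
       (if Nat.leb l d0 then INR K ^ l else 0) + q ^ l).
    { intros l Hl.
      assert (Hin : forall y, In y (filter (fun x => Nat.eqb (length x) l) T) ->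
                exists k, (k < N)%nat /\ sel k = y /\ length y = l).
      { intros y Hy. apply filter_In in Hy. destruct Hy as [Hy Hyl].
        apply Nat.eqb_eq in Hyl. apply in_Tset in Hy. destruct Hy as [k [Hk Ek]]. exists k; auto. }
      assert (HqP : 0 <= q ^ l) by (apply pow_le; lra).
      destruct (Nat.leb_spec l d0) as [Hld|Hld].
      - assert (length (filter (fun x => Nat.eqb (length x) l) T) <= length (all_seqs K l))%nat.
        { apply NoDup_incl_length. apply NoDup_filter; auto.
          intros y Hy. destruct (Hin y Hy) as [k [Hk [<- Hl']]]. apply in_all_seqs. split; auto.
          apply Harms; auto. }
        rewrite length_all_seqs in H. apply le_INR in H. rewrite pow_INR in H. lra.
      - set (eps := INR (d - l) * Delta).
        assert (length (filter (fun x => Nat.eqb (length x) l) T) <=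
                length (filter (fun i => if Rle_dec (vstar K zmax d f z - v K zmax d f z i) eps
                                then true else false) (all_seqs K l)))%nat.
        { apply NoDup_incl_length. apply NoDup_filter; auto.
          intros y Hy. destruct (Hin y Hy) as [k [Hk [<- Hl']]]. apply filter_In. split.
          - apply in_all_seqs. split; auto. apply Harms; auto.
          - destruct (Rle_dec _ _) as [_|Hn]; auto. exfalso. apply Hn. unfold eps. rewrite <- Hl'. apply Hexp; auto. }
        apply le_INR in H.
        pose proof (Hprop l ltac:(lia)) as Hp. unfold prop_opt in Hp. fold eps in Hp.
        assert (HKl : 0 < INR (K ^ l)) by (apply lt_0_INR; apply Nat.neq_0_lt_0, Nat.pow_nonzero; lia).
        set (cnt := INR (length (filter (fun i => if Rle_dec (vstar K zmax d f z - v K zmax d f z i) eps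
                                then true else false) (all_seqs K l)))) in *.
        assert (cnt <= lambda ^ l * INR (K ^ l)).
        { apply Rmult_le_compat_r with (r := INR (K ^ l)) in Hp; [|lra].
          replace (cnt / INR (K ^ l) * INR (K ^ l)) with cnt in Hp by (field; lra). auto. }
        unfold q. rewrite Rpow_mult_distr, <- pow_INR. eapply Rle_trans; [apply H|]. rewrite Rplus_0_l. exact H0. }
    assert (HNsum : INR N <= sum_f_R0 (fun l => INR K ^ l) d0 + sum_f_R0 (fun l => q ^ l) D).
    { rewrite <- HTlen, (count_split T D HTD).
      eapply Rle_trans. apply sum_Rle. intros l Hl. apply Hcount; auto.
      rewrite sum_plus. apply Rplus_le_compat_r. apply (sum_bK (INR K) d0 D ltac:(lra)). }
    assert (Hn0 : sum_f_R0 (fun l => INR K ^ l) d0 = (INR K ^ (d0 + 1) - 1) / (INR K - 1)).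
    { rewrite <- GP_finite. field. lra. }
    assert (Hsq : sum_f_R0 (fun l => q ^ l) D * (q - 1) = q ^ (D + 1) - 1) by apply GP_finite.
    set (X := INR N - (INR K ^ (d0 + 1) - 1) / (INR K - 1)) in *.
    assert (HX0 : 0 < X) by (unfold X; lra).
    assert (HXq : X < q ^ (D + 1) / (q - 1)).
    { assert (HXs : X <= sum_f_R0 (fun l => q ^ l) D) by (unfold X; lra).
      assert (X * (q - 1) <= sum_f_R0 (fun l => q ^ l) D * (q - 1)) by (apply Rmult_le_compat_r; lra).
      assert (X * (q - 1) < q ^ (D + 1)) by lra.
      apply Rmult_lt_reg_r with (r := q - 1); [lra|]. field_simplify; lra. }
    assert (Hln : ln X < INR (D + 1) * ln q - ln (q - 1)).
    { rewrite <- ln_pow by lra.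
      assert (E : ln (q ^ (D + 1) / (q - 1)) = ln (q ^ (D + 1)) - ln (q - 1)).
      { unfold Rdiv. rewrite ln_mult, ln_Rinv. ring. lra. apply pow_lt; lra. apply Rinv_0_lt_compat; lra. }
      rewrite <- E. apply ln_increasing; auto. }
    assert (Hlq : 0 < ln q) by (rewrite <- ln_1; apply ln_increasing; lra).
    assert (Hkey : ln X / ln q + ln (q - 1) / ln q < INR D + 1).
    { rewrite plus_INR in Hln. simpl INR in Hln at 2.
      apply Rmult_lt_reg_r with (r := ln q); auto.
      replace ((ln X / ln q + ln (q - 1) / ln q) * ln q) with (ln X + ln (q - 1)) by (field; lra).
      lra. }
    eapply Rle_trans. apply Hexp; auto.
    rewrite HlenN. fold D. rewrite minus_INR by lia.
    apply Rmult_le_compat_r; auto. lra.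
Qed.
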